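(* If $p>2$ is a prime, then $P(p,3)=\mathrm{lcm}(O(p),6)$.
   Context: $O(p)$ is the multiplicative order of $2$ modulo $p$. For positive integers $m,n$, let $\mathbf{Z}_m$ be the integers modulo $m$ and $T:\mathbf{Z}_m^n\to\mathbf{Z}_m^n$, $T(a_0,\dots,a_{n-1})=(a_0+a_1,a_1+a_2,\dots,a_{n-1}+a_0)$. For $\mathbf{a}\in\mathbf{Z}_m^n$ the cycle length of $(T^k\mathbf{a})_{k\ge0}$ is the smallest positive integer $P$ such that there is $N$ with $T^{k+P}\mathbf{a}=T^k\mathbf{a}$ for all $k\ge N$. $P(m,n)$ denotes the maximum of these cycle lengths over all $\mathbf{a}\in\mathbf{Z}_m^n$. *)

(* Defs.v *)
From mathcomp Require Import all_boot all_order all_algebra.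
Set Implicit Arguments. Unset Strict Implicit. Unset Printing Implicit Defensive.
Import GRing.Theory.
Local Open Scope ring_scope.

(* Vectors of Z_m^n, as finite functions 'I_n -> 'Z_m.
   NB: 'Z_m is genuinely Z/mZ only for m >= 2; the theorem uses m = p > 2. *)
Definition vec (m n : nat) := {ffun 'I_n -> 'Z_m}.

Definition Tmap (m n : nat) (a : vec m n) : vec m n :=
  [ffun i => a i + a (ordS i)].

Definition is_period (m n : nat) (a : vec m n) (P : nat) : Prop :=
  (0 < P)%N /\ exists N : nat, forall k : nat, (N <= k)%N ->
    iter (k + P) (@Tmap m n) a = iter k (@Tmap m n) a.

Definition is_cycle_length (m n : nat) (a : vec m n) (P : nat) : Prop :=
  is_period a P /\ forall Q : nat, is_period a Q -> (P <= Q)%N.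

Definition is_Pmax (m n L : nat) : Prop :=
  (exists a : vec m n, is_cycle_length a L) /\
  forall (a : vec m n) (P : nat), is_cycle_length a P -> (P <= L)%N.

Definition is_order2 (p o : nat) : Prop :=
  (0 < o)%N /\ (2 ^ o = 1 %[mod p])%N /\
  forall k : nat, (0 < k)%N -> (2 ^ k = 1 %[mod p])%N -> (o <= k)%N.

(* Main.v *)
Require Import Defs.
From mathcomp Require Import all_boot all_order all_algebra ring zify.
Import GRing.Theory.
Local Open Scope ring_scope.
Set Implicit Arguments. Unset Strict Implicit.

Definition mk p (x y z : 'Z_p) : vec p 3 := [ffun i : 'I_3 => nth 0 [:: x; y; z] i].

Lemma Tmap_mk p (x y z : 'Z_p) : Tmap (mk x y z) = mk (x+y) (y+z) (z+x).
Proof.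
apply/ffunP => i; rewrite !ffunE; case: i => [[|[|[|//]]] Hi] //=.
Qed.

Definition i1 : 'I_3 := @Ordinal 3 1 isT.
Definition i2 : 'I_3 := @Ordinal 3 2 isT.

Lemma mk_eta p (a : vec p 3) : a = mk (a ord0) (a i1) (a i2).
Proof.
apply/ffunP => i; rewrite !ffunE; case: i => [[|[|[|//]]] Hi] /=.
- by congr (a _); apply: val_inj.
- by congr (a _); apply: val_inj.
- by congr (a _); apply: val_inj.
Qed.

Lemma mk_inj p (x y z x' y' z' : 'Z_p) : mk x y z = mk x' y' z' -> [/\ x = x', y = y' & z = z'].
Proof.
move=> /ffunP H; have := H ord0; have := H i1; have := H i2; rewrite !ffunE /=. by [].
Qed.

Lemma iter6 p (x y z : 'Z_p) : iter 6 (@Tmap p 3) (mk x y z) =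
  mk (x + 21%:R * (x+y+z)) (y + 21%:R * (x+y+z)) (z + 21%:R * (x+y+z)).
Proof.
rewrite !iterSr !Tmap_mk /=; congr mk; ring.
Qed.

Fixpoint cc (q : nat) : nat := if q is q'.+1 then (64 * cc q' + 21)%N else 0%N.

Lemma cc_eq q : (3 * cc q + 1 = 64 ^ q)%N.
Proof. elim: q => //= q IH; rewrite expnS -IH; lia. Qed.

Lemma iter6q p q (x y z : 'Z_p) : iter (6 * q) (@Tmap p 3) (mk x y z) =
  mk (x + (cc q)%:R * (x+y+z)) (y + (cc q)%:R * (x+y+z)) (z + (cc q)%:R * (x+y+z)).
Proof.
elim: q => [|q IH]; first by rewrite muln0 /=; congr mk; ring.
rewrite mulnS iterD IH iter6 /=; congr mk; rewrite ?natrD ?natrM; ring.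
Qed.

Lemma nat0 p (hp : (1 < p)%N) n : ((n%:R : 'Z_p) == 0) = (p %| n)%N.
Proof. by rewrite -(inj_eq val_inj) /= val_Zp_nat. Qed.

Lemma cc3 q : (3 %| cc q)%N.
Proof. elim: q => //= q IH; rewrite dvdn_add ?dvdn_mull //. Qed.

Lemma cc0 p q : prime p -> (2 < p)%N -> (2^(6*q) = 1 %[mod p])%N -> (cc q)%:R = 0 :> 'Z_p.
Proof.
move=> pp p2 H; apply/eqP; rewrite nat0; last by apply: ltnW.
have H3 : (p %| 3 * cc q)%N.
  have E : (64 ^ q = 2 ^ (6*q))%N by rewrite expnM.
  by rewrite -(addnK 1 (3 * cc q)%N) cc_eq E -eqn_mod_dvd ?expn_gt0 //; apply/eqP.
case: (eqVneq p 3) => [->|np3]; first exact: cc3.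
rewrite Gauss_dvdr // in H3; rewrite prime_coprime //; apply/negP => /dvdn_leq.
move=> /(_ isT) => hp; have : p = 3%N by apply/eqP; rewrite eqn_leq hp.
by move/eqP; rewrite (negbTE np3).
Qed.

Lemma ord_dvd p o Q : is_order2 p o -> (2^Q = 1 %[mod p])%N -> (o %| Q)%N.
Proof.
move=> [o0 [Ho omin]] HQ.
have HQ' : (2^(Q %% o) = 1 %[mod p])%N.
  move: HQ; rewrite {1}(divn_eq Q o) expnD [(Q %/ o * o)%N]mulnC expnM.
  rewrite -modnMml -modnXm.
  by rewrite Ho modnXm exp1n modnMml mul1n.
case: (posnP (Q %% o)) => [h|hr]; first by rewrite /dvdn h.
by have := omin _ hr HQ'; rewrite leqNgt ltn_pmod.
Qed.

Lemma lin (R : comPzRingType) (L1 L2 R1 R2 K : R) :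
  L1 = R1 -> L2 = R2 -> L1 - L2 - (R1 - R2) = K -> K = 0.
Proof. by move=> -> -> <-; rewrite subrr. Qed.

Lemma bad p k : (2 < p)%N -> (k.+1 <= 2)%N -> (- (k.+1%:R) : 'Z_p) = 0 -> False.
Proof.
move=> p2 k2 /eqP; rewrite oppr_eq0 nat0; last by apply: ltnW.
move=> /(dvdn_leq (ltn0Sn k)) hle; have := leq_trans p2 hle.
by rewrite ltnNge k2.
Qed.

Theorem proposition7p3 (p o : nat) :
  prime p -> (2 < p)%N -> is_order2 p o -> is_Pmax p 3 (lcmn o 6).
Proof.
move=> pp p2 Hord.
have p1 : (1 < p)%N by apply: ltnW.
set L := lcmn o 6.
have L6 : (6 %| L)%N := dvdn_lcmr _ _.
have oL : (o %| L)%N := dvdn_lcml _ _.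
have L0 : (0 < L)%N by rewrite lcmn_gt0; case: Hord => ->.
have Lq : L = (6 * (L %/ 6))%N by rewrite mulnC divnK.
have Hc : (cc (L %/ 6))%:R = 0 :> 'Z_p.
  apply: cc0 => //; rewrite -Lq; case: Hord => _ [Ho _].
  move: oL => /dvdnP [k ->]; rewrite mulnC expnM.
  by rewrite -modnXm Ho modnXm exp1n.
have HL : forall b : vec p 3, iter L (@Tmap p 3) b = b.
  move=> b; rewrite Lq [in LHS](mk_eta b) iter6q Hc !mul0r !addr0 -mk_eta //.
have HLm : forall m (b : vec p 3), iter (L * m) (@Tmap p 3) b = b.
  by elim=> [|m IH] b; rewrite ?muln0 // mulnS iterD IH HL.
have per : forall a : vec p 3, is_period a L.
  by move=> a; split => //; exists 0%N => k _; rewrite addnC iterD HL.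
split; last by move=> a P [_ min]; apply: min; apply: per.
exists (mk 1 0 0); split; first exact: per.
move=> Q [Q0 [N HN]].
have HQ : iter Q (@Tmap p 3) (mk 1 0 0) = mk 1 0 0.
  have := HN (L * N)%N (leq_pmull _ L0).
  by rewrite addnC iterD HLm.
rewrite (divn_eq Q 6) addnC iterD mulnC iter6q in HQ.
have key : (Q %% 6 = 0)%N /\ (cc (Q %/ 6))%:R = 0 :> 'Z_p.
  move: HQ; set c := (cc (Q %/ 6))%:R; have : (Q %% 6 < 6)%N by rewrite ltn_pmod.
  case: (Q %% 6)%N => [|[|[|[|[|[|//]]]]]] _ /=; rewrite ?Tmap_mk => /mk_inj [h0 h1 h2].
  - split => //; have -> : c = 0 + c * (1 + 0 + 0) by ring.
    exact h1.
  - by exfalso; apply: (@bad p 0) => //; apply: (lin h1 h2); ring.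
  - by exfalso; apply: (@bad p 0) => //; apply: (lin h0 h1); ring.
  - by exfalso; apply: (@bad p 1) => //; apply: (lin h0 h1); ring.
  - by exfalso; apply: (@bad p 1) => //; apply: (lin h0 h1); ring.
  - by exfalso; apply: (@bad p 0) => //; apply: (lin h0 h1); ring.
case: key => k1 k2.
have Q6 : Q = (6 * (Q %/ 6))%N by rewrite {1}(divn_eq Q 6) k1 addn0 mulnC.
have H2 : (2 ^ Q = 1 %[mod p])%N.
  apply/eqP; rewrite eqn_mod_dvd ?expn_gt0 // Q6 expnM -cc_eq addnK.
  by apply: dvdn_mull; rewrite -nat0 // k2.
have oQ := ord_dvd Hord H2.
have sQ : (6 %| Q)%N by rewrite /dvdn k1.
by apply: dvdn_leq => //; rewrite dvdn_lcm oQ sQ.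
Qed.
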